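(* Let $F$ be a field of characteristic not 2 or 3 and $E$ an étale cubic $F$-algebra. Let $v_{0,E}=(1,0,0,-1)\in V_E(F)$. Then \[\mathrm{Stab}_{M_E}(v_{0,E})=\Big\{\begin{pmatrix}\alpha&0\\0&\alpha^{-1}\end{pmatrix}:\alpha\in E^1\Big\}\rtimes\{1,w\}\cong E^1\rtimes\mathbb Z/2\mathbb Z,\qquad w=\begin{pmatrix}0&1\\1&0\end{pmatrix},\] and $\mathrm{Stab}_{\tilde M_E}(v_{0,E})=E^1\rtimes(\mathbb Z/2\mathbb Z\times S_E)$. As subgroups of $GL_2(E)^0\rtimes S_E(F)$ (under the fixed isomorphism $M_E(F)\cong GL_2(E)^0$), this stabilizer equals the group of $F$-automorphisms $\mathrm{Aut}_F(E,C_E,Q,\beta)$ of the twisted composition algebra $C_E=E\oplus E$, $Q(x,y)=xy$, $\beta(x,y)=(y^\#,x^\#)$.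
   Context: $E^1=\{\alpha\in E:N_E(\alpha)=1\}$; $x^\#$ is the adjoint with $xx^\#=N_E(x)$. $GL_2(E)^0=\{g\in GL_2(E):\det g\in F^\times\}$; $S_E(F)=\mathrm{Aut}_F(E)$. $\tilde M_E(F)=GL_2(E)^0\rtimes S_E(F)$ acts on $V_E(F)=F\oplus E\oplus E\oplus F$ (cubes $(a,e,f,b)$) as follows: $\sigma\in S_E(F)$ acts by $(a,e,f,b)\mapsto(a,\sigma e,\sigma f,b)$; $\mathrm{diag}(\alpha,\beta)$ with $\alpha\beta\in F^\times$ acts by $(a,e,f,b)\mapsto(\alpha^\#\beta^{-1}a,\alpha^\#\alpha^{-1}e,\beta^\#\beta^{-1}f,\beta^\#\alpha^{-1}b)$; $w$ acts by $(a,e,f,b)\mapsto(-b,-f,-e,-a)$; the full action is the $F$-form (via Galois descent along $E\otimes\bar F\cong\bar F^3$) of the split action of $(GL_2^3)^0$ on $F^2\otimes F^2\otimes F^2$ by $d^{-1}g_1\otimes g_2\otimes g_3$ ($d$ the common determinant), with $a,b$ the coefficients of $u_1^{\otimes3},u_2^{\otimes3}$, $e_i$ (resp. $f_i$) the coefficient of the basis vector with $u_2$ (resp. $u_1$) in the $i$-th factor and $u_1$ (resp. $u_2$) elsewhere. An $F$-automorphism of $C_E$ is a pair $(\phi,\sigma)$, $\sigma\in\mathrm{Aut}_F(E)$, $\phi$ $F$-linear bijective with $\phi(av)=\sigma(a)\phi(v)$, $\sigma\circ Q=Q\circ\phi$, $\phi\circ\beta=\beta\circ\phi$; it is viewed in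 $GL_2(E)\rtimes S_E(F)$ by writing $\phi$ as an $E$-linear map composed with $\sigma$ acting coordinatewise on $E^2$. *)

(* Defs.v *)
From HB Require Import structures.
From mathcomp Require Import all_boot all_order all_algebra all_field.
Set Implicit Arguments. Unset Strict Implicit. Unset Printing Implicit Defensive.
Import GRing.Theory.
Local Open Scope ring_scope.

Section Cubic.
Variables (F : fieldType) (E : falgType F).

Definition lmx (x : E) := passmx.mxof (vbasis {:E}) (vbasis {:E}) (amull x).
(* Norm, trace and second coefficient of the characteristic polynomial:
   char_poly(L_x) = t^3 - T t^2 + S t - N. *)
Definition normE (x : E) : F := \det (lmx x).
Definition traceE (x : E) : F := \tr (lmx x).
Definition secE (x : E) : F := (char_poly (lmx x))`_1.
(* adjoint x^# = x^2 - T(x) x + S(x), so that x x^# = N(x) (Cayley-Hamilton) *)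
Definition adjE (x : E) : E := x ^+ 2 - traceE x *: x + (secE x)%:A.
Definition crossE (x y : E) : E := adjE (x + y) - adjE x - adjE y.

Definition normone (a : E) : Prop := normE a = 1.

Definition GL2_0 (g : 'M[E]_2) : Prop := exists c : F, c != 0 /\ \det g = c%:A.

Definition isFAut (s : E -> E) : Prop :=
  [/\ forall (c : F) x y, s (c *: x + y) = c *: s x + s y,
      s 1 = 1, forall x y, s (x * y) = s x * s y & bijective s].

Definition VE : Type := (F * E * E * F)%type.
Definition v0E : VE := (1, 0, 0, -1).
Definition embV (v : VE) : E * E * E * E :=
  let: (a, e, f, b) := v in (a%:A, e, f, b%:A).

Definition sigmaV (s : E -> E) (v : VE) : VE :=
  let: (a, e, f, b) := v in (a, s e, s f, b).

(* action of g = [[p,q],[r,s]] in GL_2(E)^0 on V_E(F): the F-form of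
   d^{-1} g1 (x) g2 (x) g3, written with the E-operations; the result
   lies in the image of embV, we record it in E^4. *)
Definition actV (g : 'M[E]_2) (v : VE) : E * E * E * E :=
  let: (a, e, f, b) := v in
  let p := g 0 0 in let q := g 0 1 in let r := g 1 0 in let s := g 1 1 in
  let di := (\det g)^-1 in
  ( di * ((normE p * a)%:A + (traceE (adjE p * q * e))%:A
          + (traceE (p * adjE q * f))%:A + (normE q * b)%:A),
    di * (a *: (r * adjE p) + b *: (s * adjE q) + s * adjE p * e
          + r * crossE p (q * e) + r * adjE q * f + s * crossE (p * f) q),
    di * (a *: (p * adjE r) + b *: (q * adjE s) + q * adjE r * e
          + p * crossE (s * e) r + p * adjE s * f + q * crossE (r * f) s),
    di * ((normE r * a)%:A + (traceE (adjE r * s * e))%:A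
          + (traceE (r * adjE s * f))%:A + (normE s * b)%:A) ).

Definition actM (g : 'M[E]_2) (s : E -> E) (v : VE) := actV g (sigmaV s v).

Definition diagE (a : E) : 'M[E]_2 :=
  \matrix_(i, j) (if i == j then (if i == 0 then a else a^-1) else 0).
Definition wE : 'M[E]_2 := \matrix_(i, j) (if i == j then 0 else 1).

Definition QC (v : 'cV[E]_2) : E := v 0 0 * v 1 0.
Definition betaC (v : 'cV[E]_2) : 'cV[E]_2 :=
  \col_i (if i == 0 then adjE (v 1 0) else adjE (v 0 0)).

Definition isAutC (s : E -> E) (phi : 'cV[E]_2 -> 'cV[E]_2) : Prop :=
  isFAut s /\
  (forall u v, phi (u + v) = phi u + phi v) /\
  (forall (c : F) v, phi ((c%:A : E) *: v) = (c%:A : E) *: phi v) /\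
  bijective phi /\
  (forall (a : E) v, phi (a *: v) = s a *: phi v) /\
  (forall v, s (QC v) = QC (phi v)) /\
  (forall v, phi (betaC v) = betaC (phi v)).

(* E is an etale cubic F-algebra: commutative, of dimension 3, and
   E (x)_F L ~= L^3 for an algebraically closed field L over F, i.e. the
   canonical L-algebra map E (x) L -> L^3 given by three F-algebra
   homomorphisms chi_i : E -> L is bijective. *)
Definition alg_hom_over (L : fieldType) (iota : F -> L) (chi : E -> L) : Prop :=
  [/\ chi 1 = 1, forall x y, chi (x * y) = chi x * chi y,
      forall x y, chi (x + y) = chi x + chi y &
      forall (c : F) x, chi (c *: x) = iota c * chi x].

Definition etale_cubic : Prop :=
  [/\ (forall x y : E, x * y = y * x),
      \dim {:E} = 3%N &
      exists (L : closedFieldType) (iota : {rmorphism F -> L})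
             (chi : 'I_3 -> E -> L),
        (forall i, alg_hom_over iota (chi i)) /\
        (\matrix_(i < 3, j < 3) chi i (nth 0 (vbasis {:E}) j)) \in unitmx].

End Cubic.

(* Main.v *)
Require Import Defs.
From HB Require Import structures.
From mathcomp Require Import all_boot all_order all_algebra all_field.
From mathcomp Require Import fingroup perm.
From mathcomp Require Import ring.
Import GRing.Theory.
Local Open Scope ring_scope.

Set Implicit Arguments. Unset Strict Implicit. Unset Printing Implicit Defensive.

Lemma cast_unit (L : fieldType) n (hn : n = 3%N) (h : 'I_3 -> nat -> L) :
  (\matrix_(i < 3, j < 3) h i j) \in unitmx ->
  (\matrix_(i < n, j < n) h (cast_ord hn i) j) \in unitmx.
Proof.
move=> hu; subst n.
suff -> : (\matrix_(i < 3, j < 3) h (cast_ord (erefl 3%N) i) j) = \matrix_(i < 3, j < 3) h i j by [].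
by apply/matrixP=> i j; rewrite !mxE cast_ord_id.
Qed.

Lemma cast_prod (L : comNzRingType) n (hn : n = 3%N) (f : 'I_3 -> L) :
  \prod_(i < n) f (cast_ord hn i) = f 0 * f 1 * f 2.
Proof.
subst n; rewrite !big_ord_recr big_ord0 /= mul1r !cast_ord_id.
by congr (f _ * f _ * f _); apply: val_inj.
Qed.

Lemma ord3_ind (P : 'I_3 -> Prop) : P 0 -> P 1 -> P 2 -> forall i, P i.
Proof.
move=> h0 h1 h2 [[|[|[|k]]] hk] //.
- by have -> : Ordinal hk = 0 by apply/val_inj.
- by have -> : Ordinal hk = 1 by apply/val_inj.
- by have -> : Ordinal hk = 2 by apply/val_inj.
Qed.

Lemma char_poly_tr (R : comNzRingType) n (A : 'M[R]_n) : char_poly A^T = char_poly A.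
Proof.
rewrite /char_poly -det_tr; congr (\det _).
by rewrite /char_poly_mx linearB /= tr_scalar_mx -map_trmx trmxK.
Qed.

Lemma char_poly_conj (R : fieldType) n (V A : 'M[R]_n) : V \in unitmx ->
  char_poly (invmx V *m A *m V) = char_poly A.
Proof.
move=> hV; rewrite /char_poly.
have -> : char_poly_mx (invmx V *m A *m V) =
  map_mx polyC (invmx V) *m char_poly_mx A *m map_mx polyC V.
  have hX : map_mx polyC (invmx V) *m 'X%:M *m map_mx polyC V = 'X%:M.
    by rewrite -mulmxA mul_scalar_mx -scalemxAr -map_mxM mulVmx // map_mx1 scalemx1.
  rewrite /char_poly_mx mulmxBr mulmxBl hX !map_mxM //.
rewrite !det_mulmx !det_map_mx mulrC mulrA -rmorphM -det_mulmx mulmxV //.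
by rewrite det1 rmorph1 mul1r.
Qed.

Lemma cubic_exp (L : comNzRingType) (a b c : L) :
  ('X - a%:P) * ('X - b%:P) * ('X - c%:P) =
  'X^3 - (a + b + c)%:P * 'X^2 + (a * b + b * c + c * a)%:P * 'X - (a * b * c)%:P.
Proof. rewrite !rmorphD !rmorphM /=. ring. Qed.

Lemma cubic_coef (L : comNzRingType) (a b c : L) :
  let P := ('X - a%:P) * ('X - b%:P) * ('X - c%:P) in
  [/\ P`_0 = - (a * b * c), P`_1 = a * b + b * c + c * a & P`_2 = - (a + b + c)].
Proof.
rewrite /= cubic_exp; split; rewrite !coefE /=. 
all: ring.
Qed.

Lemma ord2_or (i : 'I_2) : i = 0 \/ i = 1.
Proof. case: i => [[|[|k]] hk] //; [left|right]; exact: val_inj. Qed.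

Lemma det2 (R : pzRingType) (A : 'M[R]_2) : \det A = A 0 0 * A 1 1 - A 0 1 * A 1 0.
Proof.
have hS : forall s : 'S_2, s = 1%g \/ s = tperm 0 1.
  move=> s; case: (ord2_or (s 0)) => h0.
  - left; apply/permP => i; rewrite perm1; case: (ord2_or i) => ->; first exact h0.
    case: (ord2_or (s 1)) => // h1; move: h0; rewrite -h1 => /perm_inj h.
    by [].
  - right; apply/permP => i; case: (ord2_or i) => ->; first by rewrite h0 tpermL.
    rewrite tpermR; case: (ord2_or (s 1)) => // h1; move: h0; rewrite -h1 => /perm_inj.
    by [].
rewrite /determinant (bigD1 1%g) //= (bigD1 (tperm 0 1)) //=; last first.
  by apply/eqP => /permP /(_ 0); rewrite tpermL perm1.
rewrite [X in _ + (_ + X)]big1 ?addr0; last first.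
  move=> s; case: (hS s) => ->; by rewrite eqxx ?andbF.
rewrite odd_perm1 odd_tperm /= !big_ord_recl big_ord0 /= !perm1 !tpermL.
have e1 : lift ord0 ord0 = 1 :> 'I_2 by apply: val_inj.
have e0 : ord0 = 0 :> 'I_2 by apply: val_inj.
by rewrite e1 tpermR big_ord0 e0 expr0 expr1 !mul1r !mulr1 mulN1r.
Qed.

Section Main.
Variables (F : fieldType) (E : falgType F).
Hypothesis hcomm : forall x y : E, x * y = y * x.
Implicit Types x y z : E.
Hypothesis hdim : \dim {:E} = 3%N.
Variables (L : closedFieldType) (iota : {rmorphism F -> L}) (chi : 'I_3 -> E -> L).
Hypothesis hchi : forall i, alg_hom_over iota (chi i).
Hypothesis hM : (\matrix_(i < 3, j < 3) chi i (nth 0 (vbasis {:E}) j)) \in unitmx.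

Lemma chi1 i : chi i 1 = 1. Proof. by case: (hchi i). Qed.
Lemma chiM i x y : chi i (x * y) = chi i x * chi i y. Proof. by case: (hchi i). Qed.
Lemma chiD i x y : chi i (x + y) = chi i x + chi i y. Proof. by case: (hchi i). Qed.
Lemma chiZ i c x : chi i (c *: x) = iota c * chi i x. Proof. by case: (hchi i). Qed.
Lemma chi0 i : chi i 0 = 0.
Proof. by have := chiD i 0 0; rewrite addr0 => /eqP; rewrite -subr_eq subrr => /eqP. Qed.
Lemma chiN i x : chi i (- x) = - chi i x.
Proof. by apply/eqP; rewrite -subr_eq0 opprK -chiD addNr chi0. Qed.
Lemma chiB i x y : chi i (x - y) = chi i x - chi i y.
Proof. by rewrite chiD chiN. Qed.
Lemma chiA i c : chi i (c%:A) = iota c.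
Proof. by rewrite chiZ chi1 mulr1. Qed.
Lemma chiX i x k : chi i (x ^+ k) = chi i x ^+ k.
Proof. by elim: k => [|k IH]; rewrite ?expr0 ?chi1 // !exprS chiM IH. Qed.
Lemma chi_sum i n (f : 'I_n -> E) : chi i (\sum_(j < n) f j) = \sum_(j < n) chi i (f j).
Proof.
elim/big_rec2: _ => [|j y1 y2 _ <-]; first exact: chi0.
by rewrite chiD.
Qed.

Local Notation B := (vbasis {:E}).

Lemma chi_coord i z :
  chi i z = \sum_(j < \dim {:E}) iota (coord B j z) * chi i (nth 0 B j).
Proof.
rewrite [z in LHS](coord_vbasis (memvf z)) chi_sum.
by apply: eq_bigr => j _; rewrite chiZ.
Qed.

Lemma lin_zero n (hn : n = 3%N) (h : 'I_3 -> nat -> L) (c : 'I_n -> L) :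
  (\matrix_(i < 3, j < 3) h i j) \in unitmx ->
  (forall i : 'I_3, \sum_(j < n) c j * h i j = 0) -> forall j, c j = 0.
Proof.
subst n => hu hz j.
pose v : 'cV[L]_3 := \col_j c j.
have : (\matrix_(i < 3, j < 3) h i j) *m v = 0.
  apply/matrixP => i k; rewrite !mxE -[RHS](hz i).
  by apply: eq_bigr => l _; rewrite !mxE mulrC.
move/(congr1 (mulmx (invmx (\matrix_(i < 3, j < 3) h i j)))).
rewrite mulKmx // mulmx0 => /matrixP /(_ j 0); by rewrite !mxE.
Qed.

Lemma chi_inj x y : (forall i, chi i x = chi i y) -> x = y.
Proof.
move=> h; apply/eqP; rewrite -subr_eq0; apply/eqP.
set z := x - y.
have hz i : chi i z = 0 by rewrite chiB h subrr.
rewrite (coord_vbasis (memvf z)); apply: big1 => j _.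
suff -> : coord B j z = 0 by rewrite scale0r.
apply: (fmorph_inj iota); rewrite rmorph0.
apply: (lin_zero hdim (h := fun i k => chi i (nth 0 B k)) (c := fun j => iota (coord B j z)) hM) => i.
by move: (hz i); rewrite chi_coord.
Qed.


Lemma mulB x (j : 'I_(\dim {:E})) :
  x * nth 0 B j = \sum_(k < \dim {:E}) lmx x j k *: nth 0 B k.
Proof.
have hb := vbasisP {:E}.
rewrite -[LHS](passmx.rVofK hb).
have -> : x * nth 0 B j = amull x (nth 0 B j) by rewrite lfunE.
rewrite (passmx.rVof_app B hb) (passmx.rVofE hb) -rowE /passmx.vecof.
by apply: eq_bigr => k _; rewrite mxE.
Qed.

Local Notation n := (\dim {:E}).
Definition Mn : 'M[L]_n := \matrix_(i < n, j < n) chi (cast_ord hdim i) (nth 0 B j).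
Definition Dn x : 'M[L]_n := diag_mx (\row_i chi (cast_ord hdim i) x).

Lemma Mn_unit : Mn \in unitmx.
Proof. exact: (cast_unit hdim (h := fun i k => chi i (nth 0 B k)) hM). Qed.

Lemma MnA x : Mn *m (map_mx iota (lmx x))^T = Dn x *m Mn.
Proof.
apply/matrixP => i j; rewrite mul_diag_mx !mxE -chiM mulB chi_sum.
by apply: eq_bigr => k _; rewrite !mxE chiZ mulrC.
Qed.

Lemma charpE x : map_poly iota (char_poly (lmx x)) =
  ('X - (chi 0 x)%:P) * ('X - (chi 1 x)%:P) * ('X - (chi 2 x)%:P).
Proof.
rewrite map_char_poly -char_poly_tr.
have -> : (map_mx iota (lmx x))^T = invmx Mn *m Dn x *m Mn.
  by rewrite -mulmxA -MnA mulKmx // Mn_unit.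
rewrite char_poly_conj ?Mn_unit // char_poly_trig ?diag_mx_is_trig //.
rewrite -(cast_prod hdim (fun j => 'X - (chi j x)%:P)).
by apply: eq_bigr => i _; rewrite /Dn !mxE eqxx mulr1n.
Qed.

Lemma NE x : iota (normE x) = chi 0 x * chi 1 x * chi 2 x.
Proof.
have := congr1 (fun p : {poly L} => p`_0) (charpE x).
case: (cubic_coef (chi 0 x) (chi 1 x) (chi 2 x)) => /= -> _ _.
have e : (-1 : F) ^+ \dim {:E} = -1 by rewrite hdim !exprS expr0 !mulN1r opprK.
rewrite coef_map /= char_poly_det e mulN1r rmorphN /= => h.
by rewrite /normE; apply: oppr_inj.
Qed.

Lemma TE x : iota (traceE x) = chi 0 x + chi 1 x + chi 2 x.
Proof.
have := congr1 (fun p : {poly L} => p`_2) (charpE x).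
case: (cubic_coef (chi 0 x) (chi 1 x) (chi 2 x)) => /= _ _ ->.
have h2 : (2 = (\dim {:E}).-1)%N by rewrite hdim.
have hc : (char_poly (lmx x))`_2 = - traceE x.
  by rewrite h2 char_poly_trace ?hdim.
rewrite coef_map /= hc rmorphN /= => h.
by apply: oppr_inj.
Qed.

Lemma SE x : iota (secE x) = chi 0 x * chi 1 x + chi 1 x * chi 2 x + chi 2 x * chi 0 x.
Proof.
have := congr1 (fun p : {poly L} => p`_1) (charpE x).
case: (cubic_coef (chi 0 x) (chi 1 x) (chi 2 x)) => /= _ -> _.
by rewrite coef_map /=.
Qed.

Lemma chi_adj i x : chi i (adjE x) =
  chi i x ^+ 2 - (chi 0 x + chi 1 x + chi 2 x) * chi i x
  + (chi 0 x * chi 1 x + chi 1 x * chi 2 x + chi 2 x * chi 0 x).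
Proof. by rewrite /adjE chiD chiB chiX chiZ chiA TE SE. Qed.

Lemma scalarA_inj a b : a%:A = b%:A :> E -> a = b.
Proof. by move=> /(congr1 (chi 0)); rewrite !chiA => /fmorph_inj. Qed.

Ltac chis := apply: chi_inj; elim/ord3_ind;
  rewrite ?(chiD, chiB, chiN, chiM, chiZ, chiA, chi1, chi0, chiX, chi_adj, NE); ring.

Lemma adj0 : adjE (0 : E) = 0. Proof. chis. Qed.
Lemma adj1 : adjE (1 : E) = 1. Proof. chis. Qed.
Lemma adjM x y : adjE (x * y) = adjE x * adjE y. Proof. chis. Qed.
Lemma mul_adj x : x * adjE x = (normE x)%:A. Proof. chis. Qed.
Lemma adj_adj x : adjE (adjE x) = normE x *: x. Proof. chis. Qed.

Ltac nchis := apply: (fmorph_inj iota);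
  rewrite ?(rmorphM, rmorphD, rmorphB, rmorphN, rmorph1, rmorph0, rmorphXn) /=
          ?(NE, TE, chiD, chiB, chiN, chiM, chiZ, chiA, chi1, chi0, chiX, chi_adj); ring.

Lemma normM x y : normE (x * y) = normE x * normE y. Proof. nchis. Qed.
Lemma normA c : normE (c%:A : E) = c ^+ 3. Proof. nchis. Qed.
Lemma norm_adj x : normE (adjE x) = normE x ^+ 2. Proof. nchis. Qed.
Lemma norm0 : normE (0 : E) = 0. Proof. nchis. Qed.
Lemma norm1 : normE (1 : E) = 1. Proof. nchis. Qed.
Lemma trace0 : traceE (0 : E) = 0. Proof. nchis. Qed.
Lemma cross0r x : crossE x 0 = 0.
Proof. by rewrite /crossE addr0 adj0 subr0 subrr. Qed.
Lemma cross0l x : crossE 0 x = 0.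
Proof. by rewrite /crossE add0r adj0 subr0 subrr. Qed.

Lemma adj_mul x : adjE x * x = (normE x)%:A. Proof. by rewrite hcomm mul_adj. Qed.

Lemma unitN x : normE x != 0 -> x \is a GRing.unit.
Proof.
move=> hx; apply/unitrP; exists ((normE x)^-1 *: adjE x).
have h : x * ((normE x)^-1 *: adjE x) = 1.
  by rewrite -scalerAr mul_adj scalerA mulVf // scale1r.
by split=> //; rewrite hcomm.
Qed.

Lemma invN x : normE x != 0 -> x^-1 = (normE x)^-1 *: adjE x.
Proof.
move=> hx; apply: (mulrI (unitN hx)); rewrite mulrV ?unitN //.
by rewrite -scalerAr mul_adj scalerA mulVf // scale1r.
Qed.

Lemma normU x : x \is a GRing.unit -> normE x != 0.
Proof.
move=> hx; apply/eqP => h0; have := normM x x^-1.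
by rewrite mulrV // norm1 h0 mul0r => /eqP; rewrite oner_eq0.
Qed.

Lemma zero_div x y : normE x != 0 -> x * y = 0 -> y = 0.
Proof.
move=> hx hxy; have := congr1 (fun z => adjE x * z) hxy.
rewrite mulr0 mulrA adj_mul mulr_algl => /eqP; rewrite scaler_eq0 (negPf hx) /=.
by move/eqP.
Qed.

Lemma normZ c x : normE (c *: x) = c ^+ 3 * normE x.
Proof. by rewrite -mulr_algl normM normA. Qed.

Lemma actV_v0 (g : 'M[E]_2) : actV g (v0E E) =
  ((\det g)^-1 * (normE (g 0 0) - normE (g 0 1))%:A,
   (\det g)^-1 * (g 1 0 * adjE (g 0 0) - g 1 1 * adjE (g 0 1)),
   (\det g)^-1 * (g 0 0 * adjE (g 1 0) - g 0 1 * adjE (g 1 1)),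
   (\det g)^-1 * (normE (g 1 0) - normE (g 1 1))%:A).
Proof.
rewrite /actV /v0E /= !mulr0 !trace0 !scale0r !cross0r !cross0l !mulr0 !addr0.
by rewrite !mulr1 !mulrN1 !scale1r !scaleN1r !scaleNr -!scalerBl.
Qed.

Lemma diagE_entries (a : E) : [/\ diagE a 0 0 = a, diagE a 0 1 = 0, diagE a 1 0 = 0 & diagE a 1 1 = a^-1].
Proof. by rewrite /diagE !mxE. Qed.

Lemma diagw_entries (a : E) : let g := diagE a *m wE E in
  [/\ g 0 0 = 0, g 0 1 = a, g 1 0 = a^-1 & g 1 1 = 0].
Proof.
rewrite /= /diagE /wE; split; rewrite !mxE !big_ord_recl big_ord0 !mxE /=.
all: by rewrite ?mulr0 ?mul0r ?mulr1 ?addr0 ?add0r.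
Qed.

Lemma cube_one (c : F) : c != 0 -> c * c = c ^+ 3 -> c = 1.
Proof.
move=> hc h; have hcc : c * c != 0 by rewrite mulf_neq0.
apply: (mulfI hcc); rewrite mulr1 {2}h.
by rewrite !exprS expr0 mulr1 mulrA.
Qed.

Lemma cube_mone (c : F) : c != 0 -> c * c = - c ^+ 3 -> c = -1.
Proof.
move=> hc h; have hcc : c * c != 0 by rewrite mulf_neq0.
apply: (mulfI hcc); rewrite mulrN1 {2}h.
by rewrite !exprS expr0 mulr1 mulrA opprK. 
Qed.

Lemma solve1 (p q r t : E) (c : F) : c != 0 -> p * t - q * r = c%:A ->
  normE p - normE q = c -> r * adjE p = t * adjE q -> p * adjE r = q * adjE t ->
  normE r - normE t = - c ->
  (normE p = 1 /\ q = 0 /\ r = 0 /\ p * t = 1) \/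
  (normE q = 1 /\ p = 0 /\ t = 0 /\ q * r = 1).
Proof.
move=> hc hD h1 h2 h3 h4.
have e1 : p * adjE r = 0.
  have := congr1 (@adjE _ E) h2; rewrite !adjM !adj_adj -!scalerAr.
  rewrite (hcomm (adjE r) p) (hcomm (adjE t) q) -h3 => h.
  have : c *: (p * adjE r) = 0 by rewrite -h1 scalerBl h subrr.
  by move/eqP; rewrite scaler_eq0 (negPf hc) => /eqP.
have e2 : r * adjE p = 0.
  have := congr1 (@adjE _ E) h3; rewrite !adjM !adj_adj -!scalerAr.
  rewrite (hcomm (adjE p) r) (hcomm (adjE q) t) -h2 => h.
  have : (- c) *: (r * adjE p) = 0 by rewrite -h4 scalerBl h subrr.
  by move/eqP; rewrite scaler_eq0 oppr_eq0 (negPf hc) => /eqP.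
have e3 : q * adjE t = 0 by rewrite -h3 e1.
have e4 : t * adjE q = 0 by rewrite -h2 e2.
have f1 : normE r *: p = 0 by rewrite -mulr_algr -adj_mul mulrA e1 mul0r.
have f2 : normE p *: r = 0 by rewrite -mulr_algr -adj_mul mulrA e2 mul0r.
have f3 : normE t *: q = 0 by rewrite -mulr_algr -adj_mul mulrA e3 mul0r.
have f4 : normE q *: t = 0 by rewrite -mulr_algr -adj_mul mulrA e4 mul0r.
case: (eqVneq (normE p) 0) => hp.
- right.
  have hq : normE q = - c by rewrite -h1 hp sub0r opprK.
  have ht : t = 0 by move: f4; rewrite hq => /eqP; rewrite scaler_eq0 oppr_eq0 (negPf hc) => /eqP.
  have hr : normE r = - c by rewrite -h4 ht norm0 subr0.
  have hp0 : p = 0 by move: f1; rewrite hr => /eqP; rewrite scaler_eq0 oppr_eq0 (negPf hc) => /eqP.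
  move: hD; rewrite hp0 ht mul0r sub0r => hD.
  have hqr : q * r = (- c)%:A by rewrite scaleNr -hD opprK.
  have := congr1 (@normE _ E) hqr; rewrite normM normA hq hr mulNr mulrN opprK => hcc.
  have c1 : c = -1.
    apply: cube_mone => //; rewrite hcc.
    ring.
  by split; [rewrite ?hq c1 ?opprK | split => //; split => //; rewrite hqr c1 opprK scale1r].
- left.
  have hr0 : r = 0 by move/eqP: f2; rewrite scaler_eq0 (negPf hp) => /eqP.
  move: hD; rewrite hr0 mulr0 subr0 => hD.
  have := congr1 (@normE _ E) hD; rewrite normM normA => hn.
  have ht : normE t != 0.
    apply/eqP => ht; move: hn; rewrite ht mulr0 => /eqP; rewrite eq_sym expf_eq0 /=.
    by rewrite (negPf hc).
  have hq0 : q = 0 by move/eqP: f3; rewrite scaler_eq0 (negPf ht) => /eqP.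
  have hpc : normE p = c by rewrite -h1 hq0 norm0 subr0.
  have htc : normE t = c by apply: oppr_inj; rewrite -h4 hr0 norm0 sub0r.
  have c1 : c = 1 by apply: cube_one => //; rewrite -hn hpc htc.
  by split; [rewrite hpc c1 | split => //; split => //; rewrite hD c1 scale1r].
Qed.

Lemma mx2_eq (g h : 'M[E]_2) : g 0 0 = h 0 0 -> g 0 1 = h 0 1 ->
  g 1 0 = h 1 0 -> g 1 1 = h 1 1 -> g = h.
Proof.
move=> e1 e2 e3 e4; apply/matrixP => i j.
by case: (ord2_or i) => ->; case: (ord2_or j) => ->.
Qed.

Lemma unit_scalar c : c != 0 -> (c%:A : E) \is a GRing.unit.
Proof. by move=> hc; apply: unitN; rewrite normA expf_neq0. Qed.

Lemma normV (a : E) : normE a = 1 -> normE a^-1 = 1.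
Proof.
move=> ha; have hu : a \is a GRing.unit by apply: unitN; rewrite ha oner_eq0.
by have := normM a a^-1; rewrite mulrV // norm1 ha mul1r.
Qed.

Lemma stab1 (g : 'M[E]_2) :
  (GL2_0 g /\ actV g (v0E E) = embV (v0E E)) <->
  exists a : E, normone a /\ (g = diagE a \/ g = diagE a *m wE E).
Proof.
split.
- case=> [[c [hc hD]]]; rewrite actV_v0 /embV /v0E /= => -[H1 H2 H3 H4].
  have hu : \det g \is a GRing.unit by rewrite hD unit_scalar.
  have k : forall X Y, (\det g)^-1 * X = Y -> X = \det g * Y.
    by move=> X Y <-; rewrite mulrA mulrV // mul1r.
  move/k: H1; rewrite hD scale1r mulr1 => /scalarA_inj H1.
  move/k: H2; rewrite mulr0 => /eqP; rewrite subr_eq0 => /eqP H2.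
  move/k: H3; rewrite mulr0 => /eqP; rewrite subr_eq0 => /eqP H3.
  move/k: H4; rewrite hD mulr_algl scalerA mulrN1 => /scalarA_inj H4.
  rewrite det2 in hD.
  case: (solve1 hc hD H1 H2 H3 H4) => [[hp [hq [hr hpt]]] | [hq [hp [ht hqr]]]].
  + have hpu : g 0 0 \is a GRing.unit by apply: unitN; rewrite hp oner_eq0.
    exists (g 0 0); split => //; left.
    case: (diagE_entries (g 0 0)) => e1 e2 e3 e4.
    apply: mx2_eq; rewrite ?e1 ?e2 ?e3 ?e4 //.
    by apply: (mulrI hpu); rewrite hpt mulrV.
  + have hqu : g 0 1 \is a GRing.unit by apply: unitN; rewrite hq oner_eq0.
    exists (g 0 1); split => //; right.
    case: (diagw_entries (g 0 1)) => e1 e2 e3 e4.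
    apply: mx2_eq; rewrite ?e1 ?e2 ?e3 ?e4 //.
    by apply: (mulrI hqu); rewrite hqr mulrV.
- case=> a [ha hg]; have hu : a \is a GRing.unit by apply: unitN; rewrite ha oner_eq0.
  have hV := normV ha.
  case: hg => ->.
  + case: (diagE_entries a) => e1 e2 e3 e4.
    rewrite actV_v0 det2 e1 e2 e3 e4 mulr0 subr0 mulrV // invr1 !mul1r.
    rewrite /embV /v0E /= adj0 norm0 ha hV !mulr0 !mul0r !subrr subr0 sub0r.
    split => //; exists 1; split; first exact: oner_neq0.
    by rewrite scale1r det2 e1 e2 e3 e4 mulr0 subr0 mulrV.
  + case: (diagw_entries a) => e1 e2 e3 e4.
    rewrite actV_v0 !det2 e1 e2 e3 e4 mulr0 sub0r mulrV //.
    rewrite /embV /v0E /= adj0 norm0 ha hV !mulr0 !mul0r !subrr subr0 sub0r.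
    split.
      exists (-1); split; first by rewrite oppr_eq0 oner_neq0.
      by rewrite scaleN1r det2 e1 e2 e3 e4 mulr0 sub0r mulrV.
    rewrite invrN invr1 !mulN1r !oppr0 -scaleNr opprK.
    by rewrite -scaleNr.
Qed.

Lemma lin_sum (f : E -> E) : (forall c x y, f (c *: x + y) = c *: f x + f y) ->
  forall m (h : 'I_m -> E), f (\sum_(j < m) h j) = \sum_(j < m) f (h j).
Proof.
move=> hf m h.
have f0 : f 0 = 0.
  by have := hf 1 0 0; rewrite !scale1r addr0 => /eqP; rewrite -subr_eq subrr => /eqP <-.
elim/big_rec2: _ => [//|j y1 y2 _ <-].
by have := hf 1 (h j) y2; rewrite !scale1r.
Qed.

Lemma rVofZD c x y : passmx.rVof B (c *: x + y) = c *: passmx.rVof B x + passmx.rVof B y.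
Proof. exact: passmx.rVof_linear. Qed.

Lemma rVof_sum m (h : 'I_m -> E) :
  passmx.rVof B (\sum_(j < m) h j) = \sum_(j < m) passmx.rVof B (h j).
Proof.
have r0 : passmx.rVof B 0 = 0.
  by apply/rowP => j; rewrite !mxE linear0.
elim/big_rec2: _ => [//|j y1 y2 _ <-].
by have := rVofZD 1 (h j) y2; rewrite !scale1r.
Qed.

Lemma rVofZ c x : passmx.rVof B (c *: x) = c *: passmx.rVof B x.
Proof. by apply/rowP => j; rewrite !mxE linearZ. Qed.

Definition Pmat (f : E -> E) : 'M[F]_n := \matrix_(i, j) coord B j (f (nth 0 B i)).

Lemma rVof_lin (f : E -> E) : (forall c x y, f (c *: x + y) = c *: f x + f y) ->
  forall u, passmx.rVof B (f u) = passmx.rVof B u *m Pmat f.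
Proof.
move=> hf u.
have fZ : forall c x, f (c *: x) = c *: f x.
  have f0 : f 0 = 0.
    by have := hf 1 0 0; rewrite !scale1r addr0 => /eqP; rewrite -subr_eq subrr => /eqP <-.
  by move=> c x; have := hf c x 0; rewrite !addr0 f0 addr0.
rewrite {1}(coord_vbasis (memvf u)) (lin_sum hf) rVof_sum mulmx_sum_row.
apply: eq_bigr => i _; rewrite fZ rVofZ; congr (_ *: _); first by rewrite mxE.
by apply/rowP => j; rewrite !mxE.
Qed.

Lemma rowB (M : 'M[F]_n) i : row i M = passmx.rVof B (nth 0 B i) *m M.
Proof. by rewrite (passmx.rVofE (vbasisP _)) -rowE. Qed.

Lemma rVof_mul y w : passmx.rVof B (y * w) = passmx.rVof B w *m lmx y.
Proof.
have -> : y * w = amull y w by rewrite lfunE.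
by rewrite (passmx.rVof_app B (vbasisP _)).
Qed.

Lemma solve2 (p q r t : E) : 0 = p * r -> 0 = q * t -> 1 = (p + q) * (r + t) ->
  q = adjE r -> t = adjE p -> p = adjE t -> r = adjE q ->
  (normE p = 1 /\ q = 0 /\ r = 0 /\ p * t = 1) \/
  (normE q = 1 /\ p = 0 /\ t = 0 /\ q * r = 1).
Proof.
move=> hpr hqt h1 hq ht hp hr.
have pp : p = normE p *: p by rewrite {1}hp ht adj_adj.
have rr : r = normE r *: r by rewrite {1}hr hq adj_adj.
have pt : p * t = (normE p)%:A by rewrite ht mul_adj.
have qr : q * r = (normE r)%:A by rewrite hq adj_mul.
have hs : normE p + normE r = 1.
  apply: scalarA_inj; rewrite scale1r scalerDl -pt -qr h1.
  by rewrite mulrDl !mulrDr -hpr -hqt add0r addr0.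
case: (eqVneq (normE p) 0) => hp0.
- right.
  have p0 : p = 0 by rewrite pp hp0 scale0r.
  have t0 : t = 0 by rewrite ht p0 adj0.
  have hr1 : normE r = 1 by rewrite -hs hp0 add0r.
  split; first by rewrite hq norm_adj hr1 expr1n.
  by split => //; split => //; rewrite qr hr1 scale1r.
- left.
  have r0 : r = 0 by apply: (zero_div hp0); rewrite -hpr.
  have hp1 : normE p = 1 by rewrite -hs r0 norm0 addr0.
  split => //; split; first by rewrite hq r0 adj0.
  by split => //; rewrite pt hp1 scale1r.
Qed.

Lemma from_sol (g : 'M[E]_2) :
  (normE (g 0 0) = 1 /\ g 0 1 = 0 /\ g 1 0 = 0 /\ g 0 0 * g 1 1 = 1) \/
  (normE (g 0 1) = 1 /\ g 0 0 = 0 /\ g 1 1 = 0 /\ g 0 1 * g 1 0 = 1) ->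
  exists a : E, normone a /\ (g = diagE a \/ g = diagE a *m wE E).
Proof.
case => [[hp [hq [hr hpt]]] | [hq [hp [ht hqr]]]].
+ have hpu : g 0 0 \is a GRing.unit by apply: unitN; rewrite hp oner_eq0.
  exists (g 0 0); split => //; left.
  case: (diagE_entries (g 0 0)) => e1 e2 e3 e4.
  apply: mx2_eq; rewrite ?e1 ?e2 ?e3 ?e4 //.
  by apply: (mulrI hpu); rewrite hpt mulrV.
+ have hqu : g 0 1 \is a GRing.unit by apply: unitN; rewrite hq oner_eq0.
  exists (g 0 1); split => //; right.
  case: (diagw_entries (g 0 1)) => e1 e2 e3 e4.
  apply: mx2_eq; rewrite ?e1 ?e2 ?e3 ?e4 //.
  by apply: (mulrI hqu); rewrite hqr mulrV.
Qed.

Section SAut.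
Variable s : E -> E.
Hypothesis hs : isFAut s.

Lemma sL c x y : s (c *: x + y) = c *: s x + s y. Proof. by case: hs. Qed.
Lemma s0 : s 0 = 0.
Proof. by have := sL 1 0 0; rewrite !scale1r addr0 => /eqP; rewrite -subr_eq subrr => /eqP <-. Qed.
Lemma sD x y : s (x + y) = s x + s y. Proof. by have := sL 1 x y; rewrite !scale1r. Qed.
Lemma sZ c x : s (c *: x) = c *: s x. Proof. by have := sL c x 0; rewrite !addr0 s0 addr0. Qed.
Lemma sM x y : s (x * y) = s x * s y. Proof. by case: hs. Qed.
Lemma s1 : s 1 = 1. Proof. by case: hs. Qed.
Lemma sA c : s (c%:A) = c%:A. Proof. by rewrite sZ s1. Qed.
Lemma sN x : s (- x) = - s x. Proof. by rewrite -scaleN1r sZ scaleN1r. Qed.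
Lemma sB x y : s (x - y) = s x - s y. Proof. by rewrite sD sN. Qed.

Lemma s_inv : exists sv, [/\ cancel s sv, cancel sv s & (forall c x y, sv (c *: x + y) = c *: sv x + sv y)].
Proof.
case: hs => _ _ _ [sv h1 h2]; exists sv; split => // c x y.
by rewrite -{1}(h2 x) -{1}(h2 y) -sL h1.
Qed.

Lemma Pmat_unit : Pmat s \in unitmx.
Proof.
case: s_inv => sv [h1 h2 h3].
suff /mulmx1_unit [] : Pmat s *m Pmat sv = 1%:M by [].
apply/row_matrixP => i; rewrite rowB mulmxA -(rVof_lin sL) -(rVof_lin h3) h1.
by rewrite row1 (passmx.rVofE (vbasisP _)).
Qed.

Lemma lmx_s x : lmx (s x) = invmx (Pmat s) *m lmx x *m Pmat s.
Proof.
have h : lmx x *m Pmat s = Pmat s *m lmx (s x).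
  apply/row_matrixP => i; rewrite !rowB !mulmxA -rVof_mul -(rVof_lin sL).
  by rewrite sM rVof_mul (rVof_lin sL).
by rewrite -mulmxA h mulKmx // Pmat_unit.
Qed.

Lemma secE_s x : secE (s x) = secE x.
Proof. by rewrite /secE lmx_s char_poly_conj // Pmat_unit. Qed.

Lemma traceE_s x : traceE (s x) = traceE x.
Proof.
by rewrite /traceE lmx_s mxtrace_mulC mulmxA mulmxV ?Pmat_unit // mul1mx.
Qed.

Lemma s_adj x : s (adjE x) = adjE (s x).
Proof.
by rewrite /adjE sD sB expr2 sM sZ sA traceE_s secE_s -expr2.
Qed.

Definition col2 (x y : E) : 'cV[E]_2 := \col_i (if i == 0 then x else y).
Lemma col2E0 x y : col2 x y 0 0 = x. Proof. by rewrite /col2 !mxE. Qed.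
Lemma col2E1 x y : col2 x y 1 0 = y. Proof. by rewrite /col2 !mxE. Qed.

Lemma col_eq (v w : 'cV[E]_2) : v 0 0 = w 0 0 -> v 1 0 = w 1 0 -> v = w.
Proof.
move=> e0 e1; apply/matrixP => i j; rewrite (ord1 j).
by case: (ord2_or i) => ->.
Qed.

Lemma mul2 m k (A : 'M[E]_(m, 2)) (Bm : 'M[E]_(2, k)) i j :
  (A *m Bm) i j = A i 0 * Bm 0 j + A i 1 * Bm 1 j.
Proof.
rewrite mxE !big_ord_recl big_ord0 addr0.
have e1 : lift ord0 ord0 = 1 :> 'I_2 by apply: val_inj.
have e0 : ord0 = 0 :> 'I_2 by apply: val_inj.
by rewrite e1 e0.
Qed.

Lemma phiE (g : 'M[E]_2) (v : 'cV[E]_2) i :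
  (g *m map_mx s v) i 0 = g i 0 * s (v 0 0) + g i 1 * s (v 1 0).
Proof. by rewrite mul2 !mxE. Qed.

Lemma betaE0 (v : 'cV[E]_2) : betaC v 0 0 = adjE (v 1 0).
Proof. by rewrite /betaC !mxE. Qed.
Lemma betaE1 (v : 'cV[E]_2) : betaC v 1 0 = adjE (v 0 0).
Proof. by rewrite /betaC !mxE. Qed.

Local Opaque betaC col2.

Lemma autC_bwd (g : 'M[E]_2) : isAutC s (fun v => g *m map_mx s v) ->
  exists a : E, normone a /\ (g = diagE a \/ g = diagE a *m wE E).
Proof.
case=> _ [_ [_ [_ [_ [hQ hB]]]]].
have Q10 := hQ (col2 1 0); have Q01 := hQ (col2 0 1); have Q11 := hQ (col2 1 1).
rewrite /QC in Q10 Q01 Q11. rewrite !phiE in Q10 Q01 Q11.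
rewrite !col2E0 !col2E1 in Q10 Q01 Q11.
rewrite ?mul1r ?mulr1 ?mulr0 ?mul0r in Q10 Q01 Q11.
rewrite ?s0 ?s1 in Q10 Q01 Q11.
rewrite ?mul1r ?mulr1 ?mulr0 ?mul0r ?addr0 ?add0r in Q10 Q01 Q11.
have hB2 : forall x y, g 0 0 * s (adjE y) + g 0 1 * s (adjE x) = adjE (g 1 0 * s x + g 1 1 * s y) /\
     g 1 0 * s (adjE y) + g 1 1 * s (adjE x) = adjE (g 0 0 * s x + g 0 1 * s y).
  move=> x y.
  have e1 : (g *m map_mx s (betaC (col2 x y))) 0 0 = betaC (g *m map_mx s (col2 x y)) 0 0 by rewrite (hB (col2 x y)).
  have e2 : (g *m map_mx s (betaC (col2 x y))) 1 0 = betaC (g *m map_mx s (col2 x y)) 1 0 by rewrite (hB (col2 x y)).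
  rewrite (phiE g (betaC (col2 x y)) 0) (betaE0 (g *m map_mx s (col2 x y))) in e1.
  rewrite (phiE g (betaC (col2 x y)) 1) (betaE1 (g *m map_mx s (col2 x y))) in e2.
  rewrite (phiE g (col2 x y) 1) (betaE0 (col2 x y)) (betaE1 (col2 x y)) (col2E0 x y) (col2E1 x y) in e1.
  rewrite (phiE g (col2 x y) 0) (betaE0 (col2 x y)) (betaE1 (col2 x y)) (col2E0 x y) (col2E1 x y) in e2.
  by split.
have [B1 B2] := hB2 1 0; have [B3 B4] := hB2 0 1.
rewrite ?adj0 ?adj1 ?s0 ?s1 in B1 B2 B3 B4.
rewrite ?mul1r ?mulr1 ?mulr0 ?mul0r ?addr0 ?add0r in B1 B2 B3 B4.
by apply: from_sol; apply: solve2.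
Qed.


Lemma addE (u v : 'cV[E]_2) i : (u + v) i 0 = u i 0 + v i 0.
Proof. by rewrite mxE. Qed.
Lemma scaleE (b : E) (v : 'cV[E]_2) i : (b *: v) i 0 = b * v i 0.
Proof. by rewrite mxE. Qed.

Lemma bij_phi (g h : 'M[E]_2) : h *m g = 1%:M -> g *m h = 1%:M ->
  bijective (fun v : 'cV[E]_2 => g *m map_mx s v).
Proof.
move=> hg gh; case: s_inv => sv [h1 h2 _].
exists (fun w => map_mx sv (h *m w)) => v.
- rewrite mulmxA hg mul1mx; apply/matrixP => i j; rewrite !mxE; exact: h1.
- have -> : map_mx s (map_mx sv (h *m v)) = h *m v.
    by apply/matrixP => i j; rewrite !mxE h2.
  by rewrite mulmxA gh mul1mx.
Qed.

Lemma autC_fwd (g : 'M[E]_2) (a : E) : normE a = 1 ->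
  (g = diagE a \/ g = diagE a *m wE E) ->
  isAutC s (fun v => g *m map_mx s v).
Proof.
move=> ha hg.
have hinv : a^-1 = adjE a by rewrite invN ?ha ?oner_eq0 // invr1 scale1r.
have hadj : adjE (adjE a) = a by rewrite adj_adj ha scale1r.
have hab : a * adjE a = 1 by rewrite mul_adj ha scale1r.
have hba : adjE a * a = 1 by rewrite adj_mul ha scale1r.
have hinv2 : (adjE a)^-1 = a.
  by rewrite invN ?norm_adj ?ha ?expr1n ?oner_eq0 // invr1 scale1r hadj.
have h5 : forall (b : E) (v : 'cV[E]_2),
    g *m map_mx s (b *: v) = s b *: (g *m map_mx s v).
  move=> b v; apply: col_eq; rewrite !phiE !scaleE !phiE !sM; chis.
split; first exact: hs.
split.
  move=> u v; apply: col_eq; rewrite !phiE !addE !phiE !sD; chis.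
split.
  by move=> c v; rewrite h5 sA.
split.
  case: hg => ->.
  - case: (diagE_entries a) => e1 e2 e3 e4.
    apply: (bij_phi (h := diagE (adjE a))).
    + case: (diagE_entries (adjE a)) => f1 f2 f3 f4.
      apply: mx2_eq; rewrite mul2 !mxE /= ?e1 ?e2 ?e3 ?e4 ?f1 ?f2 ?f3 ?f4;
      by rewrite ?hinv2 ?hinv ?mulr0 ?mul0r ?addr0 ?add0r ?hab ?hba.
    + case: (diagE_entries (adjE a)) => f1 f2 f3 f4.
      apply: mx2_eq; rewrite mul2 !mxE /= ?e1 ?e2 ?e3 ?e4 ?f1 ?f2 ?f3 ?f4;
      by rewrite ?hinv2 ?hinv ?mulr0 ?mul0r ?addr0 ?add0r ?hab ?hba.
  - case: (diagw_entries a) => e1 e2 e3 e4.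
    apply: (bij_phi (h := diagE a *m wE E)).
    + apply: mx2_eq; rewrite mul2 ?e1 ?e2 ?e3 ?e4 [in RHS]mxE /=;
      by rewrite ?hinv2 ?hinv ?mulr0 ?mul0r ?addr0 ?add0r ?hab ?hba.
    + apply: mx2_eq; rewrite mul2 ?e1 ?e2 ?e3 ?e4 [in RHS]mxE /=;
      by rewrite ?hinv2 ?hinv ?mulr0 ?mul0r ?addr0 ?add0r ?hab ?hba.
split; first exact: h5.
have hE : (g 0 0 = a /\ g 0 1 = 0 /\ g 1 0 = 0 /\ g 1 1 = adjE a) \/
          (g 0 0 = 0 /\ g 0 1 = a /\ g 1 0 = adjE a /\ g 1 1 = 0).
  case: hg => ->; [left; case: (diagE_entries a) | right; case: (diagw_entries a)];
  by move=> -> -> -> ->; rewrite ?hinv.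
split.
  move=> v; rewrite /QC !phiE sM.
  case: hE => [[-> [-> [-> ->]]] | [-> [-> [-> ->]]]];
  rewrite ?mul0r ?addr0 ?add0r.
  - transitivity ((a * adjE a) * (s (v 0 0) * s (v 1 0))); first by rewrite hab mul1r.
    chis.
  - transitivity ((a * adjE a) * (s (v 0 0) * s (v 1 0))); first by rewrite hab mul1r.
    chis.
move=> v; apply: col_eq.
- rewrite (phiE g (betaC v) 0) (betaE0 v) (betaE1 v) (betaE0 (g *m map_mx s v)).
  rewrite (phiE g v 1) !s_adj.
  case: hE => [[-> [-> [-> ->]]] | [-> [-> [-> ->]]]];
  by rewrite ?mul0r ?addr0 ?add0r adjM ?hadj.
- rewrite (phiE g (betaC v) 1) (betaE0 v) (betaE1 v) (betaE1 (g *m map_mx s v)).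
  rewrite (phiE g v 0) !s_adj.
  case: hE => [[-> [-> [-> ->]]] | [-> [-> [-> ->]]]];
  by rewrite ?mul0r ?addr0 ?add0r adjM ?hadj.
Qed.

End SAut.

Lemma main_all :
  (forall g : 'M[E]_2,
     (GL2_0 g /\ actV g (v0E E) = embV (v0E E)) <->
     exists a : E, normone a /\ (g = diagE a \/ g = diagE a *m wE E))
  /\
  (forall (g : 'M[E]_2) (s : E -> E), isFAut s ->
     ((GL2_0 g /\ actM g s (v0E E) = embV (v0E E)) <->
      exists a : E, normone a /\ (g = diagE a \/ g = diagE a *m wE E)))
  /\
  (forall (g : 'M[E]_2) (s : E -> E), isFAut s ->
     ((GL2_0 g /\ actM g s (v0E E) = embV (v0E E)) <->
      isAutC s (fun v : 'cV[E]_2 => g *m map_mx s v))).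
Proof.
have h2 : forall (g : 'M[E]_2) (s : E -> E), isFAut s ->
     ((GL2_0 g /\ actM g s (v0E E) = embV (v0E E)) <->
      exists a : E, normone a /\ (g = diagE a \/ g = diagE a *m wE E)).
  move=> g s hs; rewrite -stab1 /actM.
  have -> : sigmaV s (v0E E) = v0E E by rewrite /sigmaV /v0E /= (s0 hs).
  by [].
split; first exact: stab1.
split; first exact: h2.
move=> g s hs; rewrite h2 //; split.
- by case=> a [ha hg]; apply: (autC_fwd hs ha hg).
- exact: autC_bwd.
Qed.

End Main.

Unset Implicit Arguments.

Theorem proposition7p1 (F : fieldType) (E : falgType F)
  (hchar : (2%:R : F) != 0 /\ (3%:R : F) != 0)
  (hE : etale_cubic E) :
  (forall g : 'M[E]_2,
     (GL2_0 g /\ actV g (v0E E) = embV (v0E E)) <->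
     exists a : E, normone a /\ (g = diagE a \/ g = diagE a *m wE E))
  /\
  (forall (g : 'M[E]_2) (s : E -> E), isFAut s ->
     ((GL2_0 g /\ actM g s (v0E E) = embV (v0E E)) <->
      exists a : E, normone a /\ (g = diagE a \/ g = diagE a *m wE E)))
  /\
  (forall (g : 'M[E]_2) (s : E -> E), isFAut s ->
     ((GL2_0 g /\ actM g s (v0E E) = embV (v0E E)) <->
      isAutC s (fun v : 'cV[E]_2 => g *m map_mx s v))).
Proof.
case: hE => hcomm hdim [L [iota [chi [hchi hM]]]].
exact: (main_all hcomm hdim hchi hM).
Qed.
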